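(* (i) Let $a\in(0,1/2]$. For any $\rho,\rho'\in(0,1)$ with $\rho\ge a\rho'$, $$Q(\rho,\rho')\le\frac{5}{3a}K(\rho,\rho').$$ By contrast, for any constant $a>0$, $\sup\{Q(\rho,\rho')/L(\rho,\rho'):\rho,\rho'\in(0,1),\ \rho\ge a\rho'\}=\infty$. (ii) Consequently, if for a fixed $\gamma$ one has $\pi(X;\gamma)\ge a\,\pi^*(X)$ almost surely for some $a\in(0,1/2]$, then $$E\big[Q\{\pi(X;\gamma),\pi^*(X)\}\big]\le\frac{5}{3a}E\big[K\{\pi(X;\gamma),\pi^*(X)\}\big].$$
   Context: For $\rho,\rho'\in(0,1)$: $Q(\rho,\rho')=(\rho'/\rho-1)^2$, $K(\rho,\rho')=\rho'/\rho-1-\log(\rho'/\rho)$, $L(\rho,\rho')=\rho'\log(\rho/\rho')+(1-\rho')\log\{(1-\rho)/(1-\rho')\}$. In (ii), $\pi^*(X)=P(T=1\mid X)\in(0,1)$ and $\pi(X;\gamma)=\{1+e^{-\gamma^\top f(X)}\}^{-1}$. *)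

(* Defs.v *)
From Stdlib Require Import Reals Lra.
Open Scope R_scope.

Definition Qd (rho rho' : R) : R := (rho' / rho - 1) ^ 2.
Definition Kd (rho rho' : R) : R := rho' / rho - 1 - ln (rho' / rho).
Definition Ld (rho rho' : R) : R :=
  rho' * ln (rho / rho') + (1 - rho') * ln ((1 - rho) / (1 - rho')).

(* gamma^T v for vectors in R^p, represented as functions nat -> R on {0..p-1} *)
Fixpoint dot (p : nat) (g v : nat -> R) : R :=
  match p with
  | O => 0
  | S q => dot q g v + g q * v q
  end.

Definition pi_model {Xt : Type} (p : nat) (f : Xt -> nat -> R) (gamma : nat -> R)
  (x : Xt) : R := / (1 + exp (- dot p gamma (f x))).

(* Abstract expectation on a probability space Omega: an integrability predicate,
   an "almost surely" predicate, and an expectation functional. *)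
Definition expectation_axioms {Omega : Type}
  (Integrable : (Omega -> R) -> Prop) (AS : (Omega -> Prop) -> Prop)
  (E : (Omega -> R) -> R) : Prop :=
  (forall (P Q : Omega -> Prop), AS P -> (forall w, P w -> Q w) -> AS Q) /\
  (forall g c, Integrable g -> Integrable (fun w => c * g w)) /\
  (forall g c, Integrable g -> E (fun w => c * g w) = c * E g) /\
  (forall g h, Integrable g -> Integrable h ->
     AS (fun w => g w <= h w) -> E g <= E h).

(* Main.v *)
Require Import Defs.
From Stdlib Require Import Reals Lra Psatz.
From Coquelicot Require Import Coquelicot.
Open Scope R_scope.
Lemma mono f f' a b : a <= b -> (forall x, a<=x<=b -> derivable_pt_lim f x (f' x)) ->
  (forall x, a<x<b -> 0 <= f' x) -> f a <= f b.
Proof.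
intros Hab Hd Hp. destruct (Req_dec a b) as [->|Hne]; [lra|].
destruct (MVT_cor2 f f' a b) as [c [Hc1 Hc2]]; [lra|exact Hd|].
assert (0 <= f' c * (b - a)) by (apply Rmult_le_pos; [apply Hp; lra|lra]). lra.
Qed.
Definition G c t := c*(t-1-ln t) - (t-1)^2.
Lemma G_der c x : 0 < x -> derivable_pt_lim (G c) x (c*(1-/x) - 2*(x-1)).
Proof. intros Hx. apply is_derive_Reals. unfold G. auto_derive. lra. field. lra. Qed.
Definition H u := u - 1 - ln u - 3*(u-1)^2/(5*u).
Lemma H_der x : 0 < x -> derivable_pt_lim H x ((2*x-3)*(x-1)/(5*x^2)).
Proof. intros Hx. apply is_derive_Reals. unfold H. auto_derive. lra. field. lra. Qed.
Lemma ln2 : ln 2 < 7/10.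
Proof.
rewrite <- (ln_exp (7/10)). apply ln_increasing; [lra|].
pose proof (exp_ge_taylor (7/10) 3 ltac:(lra)). simpl in H0. unfold Factorial.fact in H0. simpl in H0. lra.
Qed.
Lemma mono_dec f f' a b : a <= b -> (forall x, a<=x<=b -> derivable_pt_lim f x (f' x)) ->
  (forall x, a<x<b -> f' x <= 0) -> f b <= f a.
Proof.
intros Hab Hd Hp. destruct (Req_dec a b) as [->|Hne]; [lra|].
destruct (MVT_cor2 f f' a b) as [c [Hc1 Hc2]]; [lra|exact Hd|].
assert (0 <= - f' c * (b - a)) by (apply Rmult_le_pos; [assert (f' c <= 0) by (apply Hp; lra); lra|lra]). lra.
Qed.
Lemma H_pos u : 2 <= u -> 0 <= H u.
Proof.
intros Hu. assert (H 2 <= H u).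
{ apply (mono H (fun x => (2*x-3)*(x-1)/(5*x^2))); [lra| intros; apply H_der; lra|].
  intros x Hx. apply Rmult_le_pos. nra. apply Rlt_le, Rinv_0_lt_compat. nra. }
assert (0 < H 2). { unfold H. pose proof ln2. lra. }
lra.
Qed.
Lemma G1 c : G c 1 = 0.
Proof. unfold G. rewrite ln_1. ring. Qed.
Lemma Gder_eq c x : 0 < x -> c*(1-/x) - 2*(x-1) = (x-1)*(c-2*x)/x.
Proof. intros; field; lra. Qed.
Lemma claim1 a rho rho' : 0 < a <= 1/2 ->
     0 < rho < 1 -> 0 < rho' < 1 -> rho >= a * rho' ->
     (rho'/rho - 1)^2 <= 5 / (3 * a) * (rho'/rho - 1 - ln (rho'/rho)).
Proof.
intros Ha Hr Hr' Hge.
set (t := rho'/rho). set (u := /a). set (c := 5/(3*a)).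
assert (Hu : 2 <= u). { unfold u. rewrite <- (Rinv_inv 2). apply Rinv_le_contravar; lra. }
assert (Hc : c = 5*u/3). { unfold c, u. field. lra. }
assert (Ht0 : 0 < t) by (unfold t; apply Rdiv_lt_0_compat; lra).
assert (Htu : t <= u). { assert (u - t = (rho - a*rho')/(a*rho)) by (unfold u,t; field; lra).
  assert (0 <= (rho - a*rho')/(a*rho)). { apply Rdiv_le_0_compat; nra. } lra. }
enough (0 <= G c t) by (unfold G in H0; lra).
destruct (Rle_lt_dec t 1) as [Ht1|Ht1].
- rewrite <- (G1 c). apply (mono_dec (G c) (fun x => c*(1-/x) - 2*(x-1))); [lra| intros; apply G_der; lra|].
  intros x Hx. rewrite Gder_eq by lra. unfold Rdiv. apply Rmult_le_0_r.
  + assert (c - 2*x >= 0) by lra. nra.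
  + apply Rlt_le, Rinv_0_lt_compat; lra.
- destruct (Rle_lt_dec t (c/2)) as [Ht2|Ht2].
  + rewrite <- (G1 c). apply (mono (G c) (fun x => c*(1-/x) - 2*(x-1))); [lra| intros; apply G_der; lra|].
    intros x Hx. rewrite Gder_eq by lra. unfold Rdiv. apply Rmult_le_pos.
    * apply Rmult_le_pos; lra.
    * apply Rlt_le, Rinv_0_lt_compat; lra.
  + apply Rle_trans with (G c u).
    * assert (G c u = 5*u/3 * H u) by (unfold G, H; rewrite Hc; field; lra).
      rewrite H0. apply Rmult_le_pos; [lra|apply H_pos; lra].
    * apply (mono_dec (G c) (fun x => c*(1-/x) - 2*(x-1))); [lra| intros; apply G_der; lra|].
      intros x Hx. rewrite Gder_eq by lra. unfold Rdiv. apply Rmult_le_0_r.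
      -- assert (c - 2*x <= 0) by lra. nra.
      -- apply Rlt_le, Rinv_0_lt_compat; lra.
Qed.
Lemma ln_lt y : 0 < y -> y <> 1 -> ln y < y - 1.
Proof. intros Hy Hn. assert (ln y <> 0). { intro E. apply Hn. rewrite <- (exp_ln y) by lra. rewrite E. apply exp_0. }
 pose proof (exp_ineq1 _ H0). rewrite exp_ln in H1 by lra. lra. Qed.
Lemma ln_lb y : 0 < y -> 1 - / y <= ln y.
Proof. intros Hy. pose proof (exp_ineq1_le (ln (/y))). rewrite exp_ln in H0 by (apply Rinv_0_lt_compat; lra).
 rewrite ln_Rinv in H0 by lra. lra. Qed.
Lemma claim2 (a : R) : 0 < a -> forall M : R, exists rho rho' : R,
     0 < rho < 1 /\ 0 < rho' < 1 /\ rho >= a * rho' /\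
     0 < - Ld rho rho' /\ M < Qd rho rho' / (- Ld rho rho').
Proof.
intros Ha M. set (r := /(8*(Rabs M + 1))). set (c0 := /(2+a)).
pose proof (Rabs_pos M) as HM.
assert (Hr : 0 < r <= 1/8). { unfold r. split. apply Rinv_0_lt_compat; lra.
  rewrite <- (Rinv_inv (1/8)). apply Rinv_le_contravar; lra. }
assert (Hc : 0 < c0 <= 1/2). { unfold c0. split. apply Rinv_0_lt_compat; lra.
  rewrite <- (Rinv_inv (1/2)). apply Rinv_le_contravar; lra. }
assert (Hac : a * c0 < 1). { unfold c0. apply (Rmult_lt_reg_r (2+a)); [lra|]. rewrite Rmult_assoc, Rinv_l by lra. lra. }
exists r, (c0*r). 
assert (Hq : (c0*r)/r = c0) by (field; lra).
assert (Hq2 : r/(c0*r) = 2+a) by (unfold c0; field; lra).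
assert (HD : 0 < - Ld r (c0*r)).
{ unfold Ld. pose proof (ln_lt (r/(c0*r)) ltac:(rewrite Hq2; lra) ltac:(rewrite Hq2; lra)).
  assert (Hy : 0 < (1-r)/(1-c0*r)) by (apply Rdiv_lt_0_compat; nra).
  assert ((1-r)/(1-c0*r) <> 1). { intro E. assert (1 - r = 1 - c0*r) by (apply (Rmult_eq_reg_r (/(1-c0*r))); [rewrite Rinv_r by nra; exact E| apply Rinv_neq_0_compat; nra]). nra. }
  pose proof (ln_lt _ Hy H1).
  assert ((1-c0*r)*((1-r)/(1-c0*r)-1) = c0*r - r) by (field; nra).
  assert (c0*r*(r/(c0*r)-1) = r - c0*r) by (field; nra).
  assert (c0*r*ln (r/(c0*r)) < c0*r*(r/(c0*r)-1)) by (apply Rmult_lt_compat_l; nra).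
  assert ((1-c0*r)*ln ((1-r)/(1-c0*r)) < (1-c0*r)*((1-r)/(1-c0*r)-1)) by (apply Rmult_lt_compat_l; nra).
  lra. }
assert (HDu : - Ld r (c0*r) <= 2*r).
{ unfold Ld. rewrite Hq2.
  assert (0 < ln (2+a)) by (rewrite <- ln_1; apply ln_increasing; lra).
  assert (Hy : 0 < (1-r)/(1-c0*r)) by (apply Rdiv_lt_0_compat; nra).
  pose proof (ln_lb _ Hy).
  assert (/((1-r)/(1-c0*r)) = (1-c0*r)/(1-r)) by (field; nra).
  rewrite H2 in H1.
  assert ((1-c0*r)*(1 - (1-c0*r)/(1-r)) <= (1-c0*r)*ln ((1-r)/(1-c0*r))) by (apply Rmult_le_compat_l; nra).
  assert ((1-c0*r)*(1 - (1-c0*r)/(1-r)) = - (1-c0*r)*(r - c0*r)/(1-r)) by (field; nra).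
  assert ((1-c0*r)*(r - c0*r)/(1-r) <= 2*r).
  { apply (Rmult_le_reg_r (1-r)); [lra|]. unfold Rdiv. rewrite Rmult_assoc, Rinv_l by lra. nra. }
  assert (0 <= c0*r*ln (2+a)) by (apply Rmult_le_pos; nra). lra. }
split; [split; lra|]. split; [split; nra|]. split; [nra|]. split; [exact HD|].
unfold Qd. rewrite Hq.
apply (Rmult_lt_reg_r (- Ld r (c0*r))); [exact HD|]. unfold Rdiv. rewrite Rmult_assoc, Rinv_l by lra.
rewrite Rmult_1_r.
destruct (Rle_lt_dec M 0).
- assert (M * - Ld r (c0*r) <= 0) by nra. nra.
- assert (M * - Ld r (c0*r) <= M * (2*r)) by (apply Rmult_le_compat_l; lra).
  assert (M * (2*r) < 1/4).
  { unfold r. rewrite Rabs_right by lra. apply (Rmult_lt_reg_r (8*(M+1))); [lra|].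
    replace (M * (2 * / (8 * (M + 1))) * (8 * (M + 1))) with (2*M) by (field; lra). lra. }
  nra.
Qed.
Lemma pi_range {Xt : Type} p (f : Xt -> nat -> R) g x : 0 < pi_model p f g x < 1.
Proof. unfold pi_model. pose proof (exp_pos (- dot p g (f x))). split.
 apply Rinv_0_lt_compat; lra. rewrite <- Rinv_1. apply Rinv_lt_contravar; lra. Qed.

Theorem proposition4 :
  (* (i), first claim *)
  (forall a rho rho' : R, 0 < a <= 1/2 ->
     0 < rho < 1 -> 0 < rho' < 1 -> rho >= a * rho' ->
     Qd rho rho' <= 5 / (3 * a) * Kd rho rho') /\
  (* (i), second claim: sup of Q / (-L) over the region is +infinity *)
  (forall a : R, 0 < a -> forall M : R, exists rho rho' : R,
     0 < rho < 1 /\ 0 < rho' < 1 /\ rho >= a * rho' /\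
     0 < - Ld rho rho' /\ M < Qd rho rho' / (- Ld rho rho')) /\
  (* (ii) *)
  (forall (Omega Xt : Type) (Integrable : (Omega -> R) -> Prop)
          (AS : (Omega -> Prop) -> Prop) (E : (Omega -> R) -> R)
          (X : Omega -> Xt) (pistar : Xt -> R)
          (p : nat) (f : Xt -> nat -> R) (gamma : nat -> R) (a : R),
     expectation_axioms Integrable AS E ->
     (forall x, 0 < pistar x < 1) ->
     0 < a <= 1/2 ->
     AS (fun w => pi_model p f gamma (X w) >= a * pistar (X w)) ->
     Integrable (fun w => Qd (pi_model p f gamma (X w)) (pistar (X w))) ->
     Integrable (fun w => Kd (pi_model p f gamma (X w)) (pistar (X w))) ->
     E (fun w => Qd (pi_model p f gamma (X w)) (pistar (X w)))
       <= 5 / (3 * a) * E (fun w => Kd (pi_model p f gamma (X w)) (pistar (X w)))).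
Proof.
split; [|split].
- intros. unfold Qd, Kd. apply claim1; assumption.
- exact claim2.
- intros Omega Xt Int AS E X pistar p f gamma a [Hmon [Hint [Hlin Hle]]] Hps Ha Has HiQ HiK.
  rewrite <- Hlin by exact HiK.
  apply Hle; [exact HiQ | apply Hint; exact HiK |].
  apply (Hmon _ _ Has). intros w Hw. unfold Qd, Kd. apply claim1; auto. apply pi_range.
Qed.
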